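(* For a connected undirected unweighted graph $G=(V,E)$ with $N$ vertices, any $S_0\subseteq V$ and any $r>1$, we have $\mathsf{fp}_{r}^{\delta=1/2}(G,S_0)\ge|S_0|/N$.
   Context: Mixed $\delta$-updating on $G$: each vertex holds a mutant (fitness $r$) or wild-type (fitness $1$); $f_S(x)$ is the fitness at $x$ when $S$ is the mutant set. At each step, with probability $\delta$ a death-Birth step: choose $v$ uniformly to die, choose a neighbor $u$ of $v$ with probability proportional to $f_S(u)$, $u$ copies its type onto $v$; with probability $1-\delta$ a Birth-death step: choose $u$ with probability proportional to $f_S(u)$ among all vertices, choose a uniformly random neighbor $v$ of $u$, $u$ copies its type onto $v$. $\mathsf{fp}_r^\delta(G,S_0)$ is the probability all vertices eventually become mutant from initial mutant set $S_0$. *)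

(* Defs.v *)
From HB Require Import structures.
From mathcomp Require Import all_boot all_order all_algebra.
From mathcomp Require Import all_classical all_reals all_analysis.
Set Implicit Arguments. Unset Strict Implicit. Unset Printing Implicit Defensive.
Import Order.TTheory GRing.Theory Num.Theory.
Import numFieldNormedType.Exports.
Local Open Scope ring_scope.

Section MixedUpdating.
Variables (R : realType) (V : finType) (e : rel V).

Definition simple_graph := symmetric e /\ irreflexive e.
Definition connected_graph := forall x y : V, connect e x y.

(* fitness at x when S is the mutant set *)
Definition fitness (r : R) (S : {set V}) (x : V) : R := if x \in S then r else 1.

Definition update (S : {set V}) (u v : V) : {set V} :=
  if u \in S then v |: S else S :\ v.

Definition indic (b : bool) : R := if b then 1 else 0.

(* death-Birth step: v uniform dies, neighbour u chosen prop. to fitness.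
   (If v has no neighbour -- only possible when N = 1 -- nothing happens.) *)
Definition dB_prob (r : R) (S T : {set V}) : R :=
  \sum_(v : V) (#|V|%:R)^-1 *
    (if #|[set u | e v u]| == 0%N then indic (T == S)
     else \sum_(u : V | e v u)
            (fitness r S u / \sum_(w : V | e v w) fitness r S w)
            * indic (T == update S u v)).

(* Birth-death step: u chosen prop. to fitness among all vertices,
   uniform neighbour v replaced. *)
Definition Bd_prob (r : R) (S T : {set V}) : R :=
  \sum_(u : V) (fitness r S u / \sum_(w : V) fitness r S w) *
    (if #|[set v | e u v]| == 0%N then indic (T == S)
     else \sum_(v : V | e u v)
            (#|[set w | e u w]|%:R)^-1 * indic (T == update S u v)).

Definition trans_prob (delta r : R) (S T : {set V}) : R :=
  delta * dB_prob r S T + (1 - delta) * Bd_prob r S T.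

(* probability that the process started at S is in the all-mutant state
   after n steps *)
Fixpoint fix_by (delta r : R) (n : nat) (S : {set V}) : R :=
  match n with
  | 0%N => indic (S == [set: V])
  | n'.+1 => \sum_(T : {set V}) trans_prob delta r S T * fix_by delta r n' T
  end.

(* fixation probability: probability of eventually reaching the all-mutant
   (absorbing) state = limit of the nondecreasing sequence above *)
Definition fp (delta r : R) (S0 : {set V}) : R :=
  limn (fun n => fix_by delta r n S0).

End MixedUpdating.

(* Main.v *)
Require Import Defs.
From HB Require Import structures.
From mathcomp Require Import all_boot all_order all_algebra.
From mathcomp Require Import all_classical all_reals all_analysis.
From mathcomp Require Import zify ring lra.
Import Order.TTheory GRing.Theory Num.Theory.
Local Open Scope ring_scope.

Lemma core (R : realType) (r Nn F Fu Fv du dv : R) : 1 < r -> 0 < Nn -> Nn <= F -> F <= r * Nn ->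
  1 <= du -> 1 <= dv -> du <= Fu -> dv <= Fv -> Fv <= r * dv ->
  0 <= (Nn^-1 * (r / Fv) + r / F * du^-1) - (Nn^-1 * (1 / Fu) + 1 / F * dv^-1).
Proof.
move=> hr hN hNF hFr hdu hdv hFu hvF hFv.
have F0 : 0 < F by lra.
have Fu0 : 0 < Fu by lra.
have Fv0 : 0 < Fv by lra.
have du0 : 0 < du by lra.
have dv0 : 0 < dv by lra.
have h1 : dv^-1 <= r / Fv.
  rewrite -subr_ge0 (_ : r / Fv - dv^-1 = (r * dv - Fv) / (Fv * dv)); last first.
    by field; rewrite ?gt_eqF.
  apply: divr_ge0; [lra| apply: mulr_ge0; lra].
have h2 : 1 / Fu <= du^-1.
  rewrite -subr_ge0 (_ : du^-1 - 1 / Fu = (Fu - du) / (Fu * du)); last first.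
    by field; rewrite ?gt_eqF.
  apply: divr_ge0; [lra| apply: mulr_ge0; lra].
have h3 : F^-1 <= Nn^-1.
  rewrite -subr_ge0 (_ : Nn^-1 - F^-1 = (F - Nn) / (F * Nn)); last first.
    by field; rewrite ?gt_eqF.
  apply: divr_ge0; [lra| apply: mulr_ge0; lra].
have h4 : Nn^-1 <= r / F.
  rewrite -subr_ge0 (_ : r / F - Nn^-1 = (r * Nn - F) / (F * Nn)); last first.
    by field; rewrite ?gt_eqF.
  apply: divr_ge0; [lra| apply: mulr_ge0; lra].
have n0 : 0 <= Nn^-1 by rewrite invr_ge0; lra.
have p0 : 0 <= du^-1 by rewrite invr_ge0; lra.
have q0 : 0 <= dv^-1 by rewrite invr_ge0; lra.
have e1 : 0 <= Nn^-1 * (r / Fv - dv^-1) by apply: mulr_ge0; lra.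
have e2 : 0 <= Nn^-1 * (du^-1 - 1 / Fu) by apply: mulr_ge0; lra.
have e3 : 0 <= (r / F - Nn^-1) * du^-1 by apply: mulr_ge0; lra.
have e4 : 0 <= (Nn^-1 - F^-1) * dv^-1 by apply: mulr_ge0; lra.
rewrite mul1r; nra.
Qed.

Section Proof.
Variables (R : realType) (V : finType) (e : rel V) (r : R).
Hypothesis Hsym : symmetric e.
Hypothesis Hr : 1 < r.

Local Notation N := (#|V|%:R : R).
Local Notation P := (trans_prob e (1/2) r).
Local Notation ind := Defs.indic.
Local Notation deg v := (#|[set u | e v u]|).
Local Notation Fn S v := (\sum_(w : V | e v w) @fitness R V r S w).
Local Notation Ft S := (\sum_(w : V) @fitness R V r S w).

Lemma ind_ge0 b : 0 <= ind R b. Proof. by case: b; rewrite /Defs.indic. Qed.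
Lemma ind_le1 b : ind R b <= 1. Proof. by case: b; rewrite /Defs.indic. Qed.

Lemma fit_ge1 (S : {set V}) (x : V) : 1 <= fitness r S x.
Proof. by rewrite /fitness; case: ifP => _ //; apply: ltW. Qed.
Lemma fit_le_r (S : {set V}) (x : V) : fitness r S x <= r.
Proof. by rewrite /fitness; case: ifP => _ //; apply: ltW. Qed.
Lemma fit_gt0 (S : {set V}) (x : V) : 0 < fitness r S x.
Proof. exact: (lt_le_trans ltr01 (fit_ge1 S x)). Qed.

Lemma sum_nbr_const v (c : R) : \sum_(u | e v u) c = c * (deg v)%:R.
Proof.
have -> : \sum_(u | e v u) c = \sum_(u in [set u | e v u]) c by apply: eq_bigl => u; rewrite inE.
by rewrite sumr_const mulr_natr.
Qed.

Lemma sum_all_const (c : R) : \sum_(u : V) c = c * N.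
Proof.
have -> : \sum_(u : V) c = \sum_(u in [set: V]) c by apply: eq_bigl => u; rewrite inE.
by rewrite sumr_const cardsT mulr_natr.
Qed.

Lemma Fn_ge (S : {set V}) v : (deg v)%:R <= Fn S v.
Proof. rewrite -[X in X <= _]mul1r -sum_nbr_const; apply: ler_sum => u _; exact: fit_ge1. Qed.
Lemma Fn_le (S : {set V}) v : Fn S v <= r * (deg v)%:R.
Proof. rewrite -sum_nbr_const; apply: ler_sum => u _; exact: fit_le_r. Qed.
Lemma Ft_ge (S : {set V}) : N <= Ft S.
Proof. rewrite -[X in X <= _]mul1r -sum_all_const; apply: ler_sum => u _; exact: fit_ge1. Qed.
Lemma Ft_le (S : {set V}) : Ft S <= r * N.
Proof. rewrite -sum_all_const; apply: ler_sum => u _; exact: fit_le_r. Qed.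

Lemma deg_pos u v : e u v -> 1 <= (deg u)%:R :> R.
Proof.
move=> huv; rewrite ler1n lt0n cards_eq0; apply/set0Pn; exists v; by rewrite inE.
Qed.

Lemma deg_le u : (deg u)%:R <= N.
Proof. by rewrite ler_nat max_card. Qed.

Lemma indic_sum (X : {set V}) (g : {set V} -> R) :
  \sum_T ind R (T == X) * g T = g X.
Proof.
rewrite (bigD1 X) //= /Defs.indic eqxx mul1r big1 ?addr0 // => T /negbTE ->.
by rewrite mul0r.
Qed.

Definition dBE S (g : {set V} -> R) :=
  \sum_(v : V) N^-1 * (if deg v == 0%N then g S else
     \sum_(u | e v u) (fitness r S u / Fn S v) * g (update S u v)).
Definition BdE S (g : {set V} -> R) :=
  \sum_(u : V) (fitness r S u / Ft S) * (if deg u == 0%N then g S else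
     \sum_(v | e u v) ((deg u)%:R)^-1 * g (update S u v)).

Lemma dB_E S g : \sum_T dB_prob e r S T * g T = dBE S g.
Proof.
rewrite /dB_prob /dBE.
under eq_bigr do rewrite mulr_suml.
rewrite exchange_big /=; apply: eq_bigr => v _.
under eq_bigr do rewrite -mulrA.
rewrite -mulr_sumr; congr (_ * _).
case: ifP => _; first exact: indic_sum.
rewrite [LHS](eq_bigr _ (fun T _ => mulr_suml _ _ _ _)).
rewrite exchange_big /=; apply: eq_bigr => u _.
under eq_bigr do rewrite -mulrA.
by rewrite -mulr_sumr indic_sum.
Qed.

Lemma Bd_E S g : \sum_T Bd_prob e r S T * g T = BdE S g.
Proof.
rewrite /Bd_prob /BdE.
under eq_bigr do rewrite mulr_suml.
rewrite exchange_big /=; apply: eq_bigr => u _.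
under eq_bigr do rewrite -mulrA.
rewrite -mulr_sumr; congr (_ * _).
case: ifP => _; first exact: indic_sum.
rewrite [LHS](eq_bigr _ (fun T _ => mulr_suml _ _ _ _)).
rewrite exchange_big /=; apply: eq_bigr => v _.
under eq_bigr do rewrite -mulrA.
by rewrite -mulr_sumr indic_sum.
Qed.

Definition Ex S (g : {set V} -> R) := \sum_T P S T * g T.

Lemma ExE S g : Ex S g = 1/2 * dBE S g + (1 - 1/2) * BdE S g.
Proof.
rewrite /Ex /trans_prob.
under eq_bigr do rewrite mulrDl -!mulrA.
by rewrite big_split /= -!mulr_sumr dB_E Bd_E mulrA.
Qed.


Lemma dB_ge0 S T : 0 <= dB_prob e r S T.
Proof.
apply: sumr_ge0 => v _; apply: mulr_ge0; first by rewrite invr_ge0.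
case: ifP => _; first exact: ind_ge0.
apply: sumr_ge0 => u _; apply: mulr_ge0; last exact: ind_ge0.
apply: divr_ge0; first exact: ltW (fit_gt0 _ _).
apply: sumr_ge0 => w _; exact: ltW (fit_gt0 _ _).
Qed.

Lemma Bd_ge0 S T : 0 <= Bd_prob e r S T.
Proof.
apply: sumr_ge0 => u _; apply: mulr_ge0.
  apply: divr_ge0; first exact: ltW (fit_gt0 _ _).
  apply: sumr_ge0 => w _; exact: ltW (fit_gt0 _ _).
case: ifP => _; first exact: ind_ge0.
apply: sumr_ge0 => v _; apply: mulr_ge0; last exact: ind_ge0.
by rewrite invr_ge0.
Qed.

Lemma P_ge0 S T : 0 <= P S T.
Proof.
rewrite /trans_prob; apply: addr_ge0; apply: mulr_ge0;
  rewrite ?dB_ge0 ?Bd_ge0 //; lra.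
Qed.

Lemma Ex_mono S g h : (forall T, g T <= h T) -> Ex S g <= Ex S h.
Proof. by move=> H; apply: ler_sum => T _; apply: ler_wpM2l; [exact: P_ge0|]. Qed.

Lemma Ex_ge0 S g : (forall T, 0 <= g T) -> 0 <= Ex S g.
Proof. by move=> H; apply: sumr_ge0 => T _; apply: mulr_ge0; [exact: P_ge0|]. Qed.

Lemma Ex_add S g h : Ex S (fun T => g T + h T) = Ex S g + Ex S h.
Proof. by rewrite /Ex -big_split; apply: eq_bigr => T _; rewrite mulrDr. Qed.

Lemma Ex_scale S a g : Ex S (fun T => a * g T) = a * Ex S g.
Proof. by rewrite /Ex mulr_sumr; apply: eq_bigr => T _; rewrite mulrCA. Qed.

Hypothesis HN : 0 < N.

Lemma Fn_pos S v : deg v != 0%N -> 0 < Fn S v.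
Proof.
move=> hd; apply: lt_le_trans (Fn_ge S v); by rewrite ltr0n lt0n.
Qed.

Lemma Ft_pos S : 0 < Ft S.
Proof. exact: lt_le_trans HN (Ft_ge S). Qed.

Lemma dBE_cst S c : dBE S (fun _ => c) = c.
Proof.
rewrite /dBE.
transitivity (\sum_(v : V) N^-1 * c).
  apply: eq_bigr => v _; case: ifP => hd //; congr (_ * _).
  rewrite -mulr_suml -mulr_suml divff ?mul1r //.
  by apply: lt0r_neq0; apply: Fn_pos; rewrite hd.
by rewrite sum_all_const mulrAC mulVf ?mul1r // lt0r_neq0.
Qed.

Lemma BdE_cst S c : BdE S (fun _ => c) = c.
Proof.
rewrite /BdE.
transitivity (\sum_(u : V) fitness r S u / Ft S * c).
  apply: eq_bigr => u _; case: ifP => hd //; congr (_ * _).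
  rewrite -mulr_suml sum_nbr_const mulVf ?mul1r //.
  by rewrite pnatr_eq0 hd.
by rewrite -mulr_suml -mulr_suml divff ?mul1r // lt0r_neq0 // Ft_pos.
Qed.

Lemma Ex_cst S c : Ex S (fun _ => c) = c.
Proof. rewrite ExE dBE_cst BdE_cst; lra. Qed.

Lemma Ex_ext S g h : (forall u v, g (update S u v) = h (update S u v)) ->
  g S = h S -> Ex S g = Ex S h.
Proof.
move=> H1 H2; rewrite !ExE; congr (_ * _ + _ * _).
  rewrite /dBE; apply: eq_bigr => v _; rewrite H2; case: ifP => _ //; congr (_ * _).
  by apply: eq_bigr => u _; rewrite H1.
rewrite /BdE; apply: eq_bigr => u _; rewrite H2; case: ifP => _ //; congr (_ * _).
by apply: eq_bigr => v _; rewrite H1.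
Qed.

Definition absorbing (S : {set V}) := forall u v, update S u v = S.

Lemma Ex_abs S g : absorbing S -> Ex S g = g S.
Proof.
move=> H; rewrite (@Ex_ext S g (fun _ => g S)) ?Ex_cst // => u v; by rewrite H.
Qed.

Lemma abs0 : absorbing finset.set0.
Proof. by move=> u v; rewrite /update inE finset.set0D. Qed.
Lemma absT : absorbing [set: V].
Proof. by move=> u v; rewrite /update inE finset.setUT. Qed.


Lemma Ex_eq S g h : (forall T, g T = h T) -> Ex S g = Ex S h.
Proof. by move=> H; apply: eq_bigr => T _; rewrite H. Qed.

Fixpoint it (n : nat) (g : {set V} -> R) (S : {set V}) : R :=
  match n with 0%N => g S | n'.+1 => Ex S (it n' g) end.

Lemma it_mono n g h : (forall T, g T <= h T) -> forall S, it n g S <= it n h S.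
Proof. move=> H; elim: n => [|n IH] S //=; exact: Ex_mono. Qed.

Lemma it_ge0 n g : (forall T, 0 <= g T) -> forall S, 0 <= it n g S.
Proof. move=> H; elim: n => [|n IH] S //=; exact: Ex_ge0. Qed.

Lemma it_addf n g h S : it n (fun T => g T + h T) S = it n g S + it n h S.
Proof. elim: n S => [|n IH] S //=; rewrite -Ex_add; exact: Ex_eq. Qed.

Lemma it_scale n a g S : it n (fun T => a * g T) S = a * it n g S.
Proof. elim: n S => [|n IH] S //=; rewrite -Ex_scale; exact: Ex_eq. Qed.

Lemma it_cst n c S : it n (fun _ => c) S = c.
Proof. elim: n S => [|n IH] S //=; rewrite -[RHS](Ex_cst S c); exact: Ex_eq. Qed.

Lemma it_add n m g S : it (n + m) g S = it n (it m g) S.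
Proof. elim: n S => [|n IH] S //=; exact: Ex_eq. Qed.

Lemma it_abs n g S : absorbing S -> it n g S = g S.
Proof. move=> H; elim: n => [|n IH] //=; rewrite Ex_abs //. Qed.

Local Notation oneT := (fun T : {set V} => ind R (T == [set: V])).

Lemma fix_by_it n S : fix_by e (1/2) r n S = it n oneT S.
Proof. elim: n S => [|n IH] S //=; apply: eq_bigr => T _; by rewrite IH. Qed.

Lemma fix_ge0 n S : 0 <= fix_by e (1/2) r n S.
Proof. rewrite fix_by_it; apply: it_ge0 => T; exact: ind_ge0. Qed.

Lemma fix_le1 n S : fix_by e (1/2) r n S <= 1.
Proof.
rewrite fix_by_it -(it_cst n 1 S); apply: it_mono => T; exact: ind_le1.
Qed.

Lemma fix_step n S : fix_by e (1/2) r n S <= fix_by e (1/2) r n.+1 S.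
Proof.
rewrite !fix_by_it -addn1 it_add; apply: it_mono => T /=.
have [->|hT] := eqVneq T [set: V].
  by rewrite Ex_abs ?eqxx //; apply: absT.
apply: Ex_ge0 => T'; exact: ind_ge0.
Qed.

Lemma fix_homo S : {homo (fun n => fix_by e (1/2) r n S) : n m / (n <= m)%N >-> n <= m}.
Proof. by apply/nondecreasing_seqP => n; exact: fix_step. Qed.


Lemma upd_card (S : {set V}) (u v : V) : #|update S u v|%:R - #|S|%:R =
  (if u \in S then (if v \in S then 0 else 1) else (if v \in S then -1 else 0)) :> R.
Proof.
rewrite /update; case: ifP => hu.
  by rewrite cardsU1 natrD; case: (v \in S) => /=; rewrite ?add0r ?subrr // addrK.
rewrite (cardsD1 v S) natrD; case: (v \in S) => /=; rewrite ?add0r ?subrr //.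
lra.
Qed.

Lemma no_nbr v u : deg v = 0%N -> e u v = false.
Proof.
move/eqP; rewrite cards_eq0 => /eqP /setP /(_ u); rewrite !inE Hsym => ->.
by [].
Qed.

Lemma submart (S : {set V}) : #|S|%:R <= Ex S (fun T => #|T|%:R).
Proof.
pose g (T : {set V}) : R := #|T|%:R - #|S|%:R.
pose H u v : R := if e u v then
   (N^-1 * (fitness r S u / Fn S v) + fitness r S u / Ft S * ((deg u)%:R)^-1)
     * g (update S u v) else 0.
have gS : g S = 0 by rewrite /g subrr.
have E1 : dBE S g = \sum_(u : V) \sum_(v : V) (if e u v then
     N^-1 * (fitness r S u / Fn S v) * g (update S u v) else 0).
  rewrite exchange_big /dBE; apply: eq_bigr => v _.
  case: ifP => hd.
    rewrite gS mulr0 big1 // => u _; by rewrite no_nbr //; apply/eqP.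
  rewrite mulr_sumr big_mkcond; apply: eq_bigr => u _ /=.
  by rewrite (Hsym v u); case: (e u v); rewrite ?mulrA.
have E2 : BdE S g = \sum_(u : V) \sum_(v : V) (if e u v then
     fitness r S u / Ft S * ((deg u)%:R)^-1 * g (update S u v) else 0).
  rewrite /BdE; apply: eq_bigr => u _.
  case: ifP => hd.
    rewrite gS mulr0 big1 // => v _; by rewrite (Hsym u v) no_nbr //; apply/eqP.
  rewrite mulr_sumr big_mkcond; apply: eq_bigr => v _ /=.
  by case: (e u v); rewrite ?mulrA ?mulr0.
have E3 : dBE S g + BdE S g = \sum_(u : V) \sum_(v : V) H u v.
  rewrite E1 E2 -big_split; apply: eq_bigr => u _.
  rewrite -big_split; apply: eq_bigr => v _ /=.
  by rewrite /H; case: (e u v); rewrite ?addr0 // mulrDl.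
have pair u v : 0 <= H u v + H v u.
  rewrite /H (Hsym v u); case huv: (e u v); first last.
    by rewrite addr0.
  have hvu : e v u by rewrite Hsym.
  rewrite /g !upd_card.
  have fin x : x \in S -> fitness r S x = r by rewrite /fitness => ->.
  have fout x : x \in S = false -> fitness r S x = 1 by rewrite /fitness => ->.
  case hu: (u \in S); case hv: (v \in S); rewrite ?mulr0 ?addr0 //.
    rewrite (fin u hu) (fout v hv) mulr1 mulrN1.
    apply: core => //; try exact: Ft_ge; try exact: Ft_le; try exact: Fn_ge; try exact: Fn_le; try exact: (deg_pos _ _ huv); try exact: (deg_pos _ _ hvu).

  rewrite (fin v hv) (fout u hu) mulr1 mulrN1 addrC.
  apply: core => //; first [exact: Ft_ge | exact: Ft_le | exact: Fn_ge | exact: Fn_le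
      | exact: (deg_pos _ _ huv) | exact: (deg_pos _ _ hvu)].
have sum0 : 0 <= \sum_(u : V) \sum_(v : V) H u v.
  have ex : \sum_(u : V) \sum_(v : V) H u v = \sum_(u : V) \sum_(v : V) H v u by rewrite exchange_big.
  have : 0 <= \sum_(u : V) \sum_(v : V) (H u v + H v u).
    by apply: sumr_ge0 => u _; apply: sumr_ge0 => v _; exact: pair.
  under eq_bigr do rewrite big_split /=.
  rewrite big_split /= -ex; lra.
have -> : (fun T : {set V} => #|T|%:R) = (fun T => 1 * g T + #|S|%:R * 1 :> R).
  by apply/funext => T; rewrite /g mulr1 mul1r subrK.
rewrite Ex_add Ex_scale Ex_scale Ex_cst mulr1 mul1r ExE.
rewrite -[X in X <= _]add0r lerD2r.
have : 0 <= dBE S g + BdE S g by rewrite E3.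
lra.
Qed.


Definition p0 : R := (1 - 1/2) * (N^-1 * N^-1).

Lemma p0_gt0 : 0 < p0.
Proof.
rewrite /p0; apply: mulr_gt0; first lra.
by apply: mulr_gt0; rewrite invr_gt0.
Qed.

Lemma p0_le1 : p0 <= 1.
Proof.
have h : N^-1 <= 1 by rewrite invf_le1 // ler1n -(ltr0n R).
have h0 : 0 <= N^-1 by rewrite invr_ge0 ltW.
rewrite /p0; nra.
Qed.

Lemma step_lb (S : {set V}) u v : u \in S -> e u v -> p0 <= P S (v |: S).
Proof.
move=> hu huv; rewrite /trans_prob.
apply: le_trans (_ : (1 - 1/2) * Bd_prob e r S (v |: S) <= _); last first.
  have := dB_ge0 S (v |: S); have : 0 <= 1 - 1/2 :> R by lra.
  move=> h1 h2; have := mulr_ge0 (_ : 0 <= 1/2 :> R) h2. 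
  move=> /(_ ltac:(lra)); lra.
rewrite /p0; apply: ler_wpM2l; first lra.
rewrite /Bd_prob (bigD1 u) //=.
have hd : deg u != 0%N by rewrite cards_eq0; apply/set0Pn; exists v; rewrite inE.
rewrite (negbTE hd) (bigD1 v huv) /= {1}/update hu eqxx /=.
have hf : fitness r S u = r by rewrite /fitness hu.
have s1 : 0 <= \sum_(i | e u i && (i != v)) ((deg u)%:R)^-1 * ind R (v |: S == update S u i).
  by apply: sumr_ge0 => i _; apply: mulr_ge0; [rewrite invr_ge0|exact: ind_ge0].
set s2 := \sum_(i | i != u) _.
have hs2 : 0 <= s2.
  apply: sumr_ge0 => i _; apply: mulr_ge0.
    apply: divr_ge0; first exact: ltW (fit_gt0 _ _).
    apply: sumr_ge0 => w _; exact: ltW (fit_gt0 _ _).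
  case: ifP => _; first exact: ind_ge0.
  apply: sumr_ge0 => j _; apply: mulr_ge0; [rewrite invr_ge0|exact: ind_ge0] => //.
set c := fitness r S u / Ft S.
have c0 : 0 <= c by apply: divr_ge0; [exact: ltW (fit_gt0 _ _) | exact: ltW (Ft_pos S)].
have hc : N^-1 <= c.
  rewrite /c hf -subr_ge0 (_ : r / Ft S - N^-1 = (r * N - Ft S) / (Ft S * N)); last first.
    by field; rewrite ?gt_eqF // Ft_pos.
  apply: divr_ge0; first by rewrite subr_ge0 Ft_le.
  by apply: mulr_ge0; apply: ltW; rewrite ?Ft_pos.
have hdd : N^-1 <= ((deg u)%:R)^-1.
  have d0 : 0 < (deg u)%:R :> R by apply: lt_le_trans (deg_pos _ _ huv).
  by rewrite lef_pV2 ?posrE // deg_le.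
have n0 : 0 <= N^-1 by rewrite invr_ge0 ltW.
set b := ((deg u)%:R)^-1 in hdd *.
set s1' := \sum_(i | _) _ in s1 *.
nra.
Qed.

Lemma cross (S : {set V}) x y : connect e x y -> x \in S -> y \notin S ->
  exists u v, [/\ u \in S, v \notin S & e u v].
Proof.
move=> hc hx hy.
case: (boolP [exists u, exists v, [&& u \in S, v \notin S & e u v]]).
  by move/existsP=> [u /existsP [v /and3P [h1 h2 h3]]]; exists u, v.
move=> hne; exfalso.
have cl : fingraph.closed e S.
  move=> a b hab; case ha: (a \in S); case hb: (b \in S) => //.
    exfalso; apply: (negP hne); apply/existsP; exists a; apply/existsP; exists b.
    by rewrite ha hb hab.
  exfalso; apply: (negP hne); apply/existsP; exists b; apply/existsP; exists a.
  by rewrite ha hb Hsym hab.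
by have := closed_connect cl hc; rewrite hx (negbTE hy).
Qed.


Hypothesis Hconn : forall x y : V, connect e x y.

Lemma reach m : forall S : {set V}, #|~: S| = m -> S != finset.set0 ->
  p0 ^+ m <= fix_by e (1/2) r m S.
Proof.
elim: m => [|m IH] S hc hS.
  have -> : S = [set: V].
    apply/setP => x; rewrite inE; apply: contraT => hx.
    have : (0 < #|~: S|)%N by apply/card_gt0P; exists x; rewrite inE.
    by rewrite hc.
  by rewrite /= eqxx expr0.
have [y hy] : exists y, y \in ~: S by apply/card_gt0P; rewrite hc.
have [x hx] : exists x, x \in S by apply/set0Pn.
rewrite inE in hy.
have [u [v [hu hv huv]]] := @cross S x y (Hconn x y) hx hy.
have hc' : #|~: (v |: S)| = m.
  have := cardsC S; have := cardsC (v |: S); rewrite cardsU1 hv hc /=; lia.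
have hT : v |: S != finset.set0 by apply/set0Pn; exists v; rewrite setU11.
rewrite exprS /= (bigD1 (v |: S)) //=.
apply: le_trans (_ : P S (v |: S) * fix_by e (1/2) r m (v |: S) <= _).
  apply: ler_pM; [exact: ltW p0_gt0 | exact: exprn_ge0 (ltW p0_gt0)
    | exact: step_lb hu huv | exact: IH].
rewrite lerDl; apply: sumr_ge0 => T _; apply: mulr_ge0; [exact: P_ge0|exact: fix_ge0].
Qed.

Lemma trans_lb S : S != finset.set0 ->
  p0 ^+ #|V| <= fix_by e (1/2) r #|V| S.
Proof.
move=> h0.
have hm : (#|~: S| <= #|V|)%N by rewrite max_card.
apply: le_trans (_ : p0 ^+ #|~: S| <= _).
  by apply: ler_wiXn2l => //; [exact: ltW p0_gt0 | exact: p0_le1].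
apply: le_trans (@reach #|~: S| S (erefl _) h0) _; exact: fix_homo.
Qed.

Definition tau (T : {set V}) : R := ind R ((T != finset.set0) && (T != [set: V])).
Definition q : R := 1 - p0 ^+ #|V|.

Lemma q_ge0 : 0 <= q.
Proof. by rewrite /q subr_ge0 exprn_ile1 // ?p0_le1 // ltW // p0_gt0. Qed.

Lemma q_lt1 : q < 1.
Proof. by rewrite /q ltrBlDr ltrDl exprn_gt0 // p0_gt0. Qed.

Lemma tau_step S : it #|V| tau S <= q * tau S.
Proof.
case: (boolP (S == finset.set0)) => [/eqP-> | h0].
  by rewrite it_abs; [rewrite /tau eqxx /= mulr0 | exact: abs0].
case: (boolP (S == [set: V])) => [/eqP-> | hT].
  by rewrite it_abs; [rewrite /tau eqxx andbF /= mulr0 | exact: absT].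
have -> : tau S = 1 by rewrite /tau h0 hT.
rewrite mulr1.
apply: le_trans (_ : it #|V| (fun T => 1 + (-1) * oneT T) S <= _).
  apply: it_mono => T; rewrite /tau.
  case: (T == [set: V]) => /=; rewrite ?andbF ?andbT /Defs.indic; first lra.
  case: ifP => _; lra.
rewrite it_addf it_cst it_scale -fix_by_it.
have := trans_lb S h0; rewrite /q; lra.
Qed.

Lemma tau_geo m S : it (m * #|V|) tau S <= q ^+ m.
Proof.
elim: m S => [|m IH] S; first by rewrite mul0n /= expr0 /tau; exact: ind_le1.
rewrite mulSnr it_add.
apply: le_trans (_ : it (m * #|V|) (fun T => q * tau T) S <= _).
  apply: it_mono => T; exact: tau_step.
rewrite it_scale exprS; apply: ler_wpM2l; [exact: q_ge0 | exact: IH].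
Qed.

Definition phi (T : {set V}) : R := N^-1 * #|T|%:R.

Lemma phi_le T : phi T <= oneT T + tau T.
Proof.
rewrite /phi /tau.
have hT : #|T|%:R <= N :> R by rewrite ler_nat max_card.
have n0 : 0 <= N^-1 by rewrite invr_ge0 ltW.
have h1 : N^-1 * #|T|%:R <= 1.
  by apply: le_trans (ler_wpM2l n0 hT) _; rewrite mulVf // lt0r_neq0.
case e1: (T == [set: V]).
  by rewrite (eqP e1) /Defs.indic /= andbF cardsT mulVf ?addr0 // lt0r_neq0.
case e0: (T == finset.set0).
  by rewrite (eqP e0) cards0 mulr0 /Defs.indic /= addr0.
by rewrite /Defs.indic /= add0r.
Qed.

Lemma phi_sub n S : phi S <= it n phi S.
Proof.
elim: n S => [|n IH] S //=.
apply: le_trans (@Ex_mono S phi (it n phi) IH).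
rewrite /phi Ex_scale; apply: ler_wpM2l; first by rewrite invr_ge0 ltW.
exact: submart.
Qed.

Lemma main_bound m S : phi S - q ^+ m <= fix_by e (1/2) r (m * #|V|) S.
Proof.
have h1 := phi_sub (m * #|V|) S.
have h2 : it (m * #|V|) phi S <= it (m * #|V|) (fun T => oneT T + tau T) S.
  by apply: it_mono => T; exact: phi_le.
rewrite it_addf -fix_by_it in h2.
have := tau_geo m S; lra.
Qed.

End Proof.

Import numFieldNormedType.Exports.
Local Open Scope classical_set_scope.
Local Open Scope ring_scope.

Theorem mainTheorem14 (R : realType) (V : finType) (e : rel V)
    (Hsimple : simple_graph e) (Hconn : connected_graph e)
    (S0 : {set V}) (r : R) (Hr : 1 < r) :
  (#|S0|%:R / #|V|%:R : R) <= fp e (1 / 2) r S0.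
Proof.
have Hsym : symmetric e by case: Hsimple.
rewrite /fp.
have [hN0 | hNpos] := eqVneq #|V| 0%N.
  rewrite hN0 invr0 mulr0.
  have novert : V -> False.
    move=> x; have : (0 < #|V|)%N by apply/card_gt0P; exists x.
    by rewrite hN0.
  have ev : \forall n \near \oo, fix_by e (1/2) r n S0 = 0.
    exists 1%N => // [[|n]] //= _.
    apply: big1 => T _.
    rewrite /trans_prob /dB_prob /Bd_prob !big1 ?mulr0 ?addr0 ?mul0r //;
      move=> x; case: (novert x).
  apply: limr_ge; first exact: (is_cvg_near_cst 0 ev).
  by apply: nearW => n; exact: fix_ge0.
have HN : 0 < (#|V|%:R : R) by rewrite ltr0n lt0n.
set u := fun n => fix_by e (1/2) r n S0.
have hom := @fix_homo R V e r Hr HN S0.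
have hcv : cvgn u.
  apply/cvg_ex; exists (sup (range u)); apply: nondecreasing_cvgn => //.
  exists 1 => _ [n _ <-]; exact: (@fix_le1 R V e r Hr HN).
have hb (m : nat) : phi R V S0 - q R V ^+ m <= limn u.
  apply: le_trans (@main_bound R V e r Hsym Hr HN Hconn m S0) _.
  exact: (nondecreasing_cvgn_le hom hcv).
have hq : `|q R V| < 1.
  by rewrite ger0_norm; [exact: q_lt1 | exact: q_ge0].
have hw : (fun m => phi R V S0 - q R V ^+ m) @ \oo --> phi R V S0.
  rewrite -[X in _ --> X]subr0; apply: cvgB; [exact: cvg_cst | exact: cvg_expr].
have -> : #|S0|%:R / #|V|%:R = phi R V S0 by rewrite /phi mulrC.
rewrite -(cvg_lim _ hw) //.
apply: limr_le; first by apply/cvg_ex; exists (phi R V S0).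
by apply: nearW => m; exact: hb.
Qed.
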